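(* Let $(R_\theta,p_\theta)_{\theta\in\Theta}$ be an incentive compatible menu with $\int_\Theta V_\theta(R_\theta,p_\theta)\,d\mu\ge0$. Then $(R_\theta,p_\theta)_{\theta\in\Theta}$ is individually rational if and only if $U_{\underline\theta}(R_{\underline\theta},p_{\underline\theta})\ge U_{\underline\theta}(L_{\underline\theta},0)$.
   Context: Setting (Yaari dual-utility insurance model). $(S,\Sigma,\mathbb P)$ is a probability space. Types: $\Theta=[\underline\theta,\bar\theta]$ with Borel $\sigma$-algebra and a probability measure $\mu$ with a Lebesgue density $q$. Fix $\bar L<\infty$. For each $\theta$ the type-$\theta$ agent faces a loss $L_\theta$ (bounded, $\Sigma$-measurable, values in $[0,\bar L]$) with continuous distribution function $F_\theta(l)=\mathbb P(L_\theta\le l)$. Retention functions: $\mathcal R=\{R:[0,\bar L]\to[0,\bar L]: R(0)=0,\ 0\le\partial R(l)/\partial l\le1\}$. A menu is a family $(R_\theta,p_\theta)_{\theta\in\Theta}$ with $R_\theta\in\mathcal R$, $p_\theta\in\mathbb R$. A distortion function is a nondecreasing $g:[0,1]\to[0,1]$ with $g(0)=0,g(1)=1$; type $\theta$ has distortion $g_\theta$ (with $g'_\theta$ the derivative in $t$), the insurer $g^{In}$. Utilities: $U_\theta(R,p)=-p-\int_0^{\bar L}[1-g_\theta(F_\theta(l))]\frac{\partial R(l)}{\partial l}dl$, $V_\theta(R,p)=p-\int_0^{\bar L}[1-g^{In}(F_\theta(l))](1-\frac{\partial R(l)}{\partial l})dl$, no-insurance utility $U_\theta(L_\theta,0)=-\int_0^{\bar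 L}[1-g_\theta(F_\theta(l))]dl$. Throughout, for every menu the maps $\theta\mapsto U_\theta(R_\theta,p_\theta)$, $\theta\mapsto V_\theta(R_\theta,p_\theta)$ lie in $L^1(\Theta,\mu)$. Individually rational: (P1) $U_\theta(R_\theta,p_\theta)\ge U_\theta(L_\theta,0)$ for all $\theta$ and (P2) $\int_\Theta V_\theta(R_\theta,p_\theta)d\mu\ge0$. Incentive compatible: $U_\theta(R_\theta,p_\theta)\ge U_\theta(R_{\theta'},p_{\theta'})$ for all $\theta,\theta'$. Standing assumptions: (A1) $g^{In}(t)\ge g_\theta(t)$ for all $t,\theta$. (A2) $\theta\mapsto F_\theta(l)$ differentiable, $\{F_\theta\}$ uniformly Lipschitz in $\theta$, $\partial F_\theta(l)/\partial\theta\le0$ for all $l$. (A3) each $g_\theta$ differentiable with $g'_\theta\le\delta$ for a common $\delta<\infty$; $\theta\mapsto g_\theta(t)$ differentiable, uniformly Lipschitz in $\theta$; $\partial g_\theta(t)/\partial\theta\le0$ for $t\in(0,1)$. *)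

(* Defs.v *)
From HB Require Import structures.
From mathcomp Require Import all_boot all_order all_algebra.
From mathcomp Require Import all_classical all_reals all_analysis.
Set Implicit Arguments. Unset Strict Implicit. Unset Printing Implicit Defensive.
Import Order.TTheory GRing.Theory Num.Theory.
Import numFieldNormedType.Exports.
Local Open Scope classical_set_scope.
Local Open Scope ring_scope.

Section Yaari.
Context {R : realType}.

Definition distr_fn {d} {S : measurableType d} (P : probability S R) (X : S -> R)
  (l : R) : R := fine (P [set s | X s <= l]).

Definition distortion (g : R -> R) : Prop :=
  g 0 = 0 /\ g 1 = 1 /\
  (forall t s, 0 <= t -> t <= s -> s <= 1 -> g t <= g s).

Definition retention (Lbar : R) (f : R -> R) : Prop :=
  f 0 = 0 /\
  (forall l, 0 <= l <= Lbar -> 0 <= f l <= Lbar) /\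
  {within `[0, Lbar], continuous f} /\
  (forall l, 0 < l < Lbar -> derivable f l 1 /\ 0 <= derive1 f l <= 1).

Definition U_util (Lbar : R) (g F : R -> R) (f : R -> R) (p : R) : R :=
  - p - Rintegral lebesgue_measure `[0, Lbar]
          (fun l => (1 - g (F l)) * derive1 f l).

Definition V_util (Lbar : R) (gIn F : R -> R) (f : R -> R) (p : R) : R :=
  p - Rintegral lebesgue_measure `[0, Lbar]
        (fun l => (1 - gIn (F l)) * (1 - derive1 f l)).

(* no-insurance utility U_theta(L_theta, 0) *)
Definition U_noins (Lbar : R) (g F : R -> R) : R :=
  - Rintegral lebesgue_measure `[0, Lbar] (fun l => 1 - g (F l)).

Definition incentive_compatible (Lbar tlo thi : R) (g F : R -> R -> R)
  (Rm : R -> R -> R) (pm : R -> R) : Prop :=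
  forall th th', tlo <= th <= thi -> tlo <= th' <= thi ->
    U_util Lbar (g th) (F th) (Rm th') (pm th') <=
    U_util Lbar (g th) (F th) (Rm th) (pm th).

Definition P1 (Lbar tlo thi : R) (g : R -> R -> R) (F : R -> R -> R)
  (Rm : R -> R -> R) (pm : R -> R) : Prop :=
  forall th, tlo <= th <= thi ->
     U_noins Lbar (g th) (F th) <= U_util Lbar (g th) (F th) (Rm th) (pm th).

Definition P2 (mu : {measure set R -> \bar R})
  (Lbar tlo thi : R) (gIn : R -> R) (F : R -> R -> R)
  (Rm : R -> R -> R) (pm : R -> R) : Prop :=
  (0 <= \int[mu]_(th in `[tlo, thi]) (V_util Lbar gIn (F th) (Rm th) (pm th))%:E)%E.

Definition individually_rational (mu : {measure set R -> \bar R})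
  (Lbar tlo thi : R) (g : R -> R -> R) (gIn : R -> R) (F : R -> R -> R)
  (Rm : R -> R -> R) (pm : R -> R) : Prop :=
  P1 Lbar tlo thi g F Rm pm /\ P2 mu Lbar tlo thi gIn F Rm pm.

End Yaari.

(* Main.v *)
Require Import Defs.
From HB Require Import structures.
From mathcomp Require Import all_boot all_order all_algebra.
From mathcomp Require Import all_classical all_reals all_analysis.
Import Order.TTheory GRing.Theory Num.Theory.
Import numFieldNormedType.Exports.
Local Open Scope classical_set_scope.
Local Open Scope ring_scope.

From mathcomp Require Import measurable_realfun lra.

Lemma harm_dnbhs (R : realType) : (@harmonic R) @ \oo --> (0:R)^'.
Proof.
move=> A /cvg_harmonic; rewrite !nbhs_simpl /=; apply: filterS => n /= H.
apply: H; exact: (lt0r_neq0 (harmonic_gt0 n)).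
Qed.

Lemma derivable_seq {R : realType} {f : R -> R} {x : R} :
  derivable f x 1 ->
  (fun n => (harmonic n)^-1 * (f (harmonic n + x) - f x)) @ \oo --> derive1 f x.
Proof.
move=> df; rewrite derive1E.
have := cvg_comp _ _ (@harm_dnbhs R) df.
apply: cvg_trans; apply: near_eq_cvg; near=> n => /=.
by rewrite /= [_%:A]mulr1.
Unshelve. all: by end_near. Qed.


From mathcomp Require Import lra.

Lemma max_lip (R : realDomainType) (x y a : R) : `|Num.max x a - Num.max y a| <= `|x - y|.
Proof.
have [xa|ax] := leP x a; have [ya|ay] := leP y a;
rewrite ?(max_r xa) ?(max_r ya) ?(max_l (ltW ax)) ?(max_l (ltW ay));
rewrite ler_norml; have [s|s] := leP 0 (x - y);
rewrite ?(ger0_norm s) ?(ltr0_norm s); apply/andP; split; lra.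
Qed.
Lemma min_lip (R : realDomainType) (x y a : R) : `|Num.min x a - Num.min y a| <= `|x - y|.
Proof.
have [xa|ax] := leP x a; have [ya|ay] := leP y a;
rewrite ?(min_l xa) ?(min_l ya) ?(min_r (ltW ax)) ?(min_r (ltW ay));
rewrite ler_norml; have [s|s] := leP 0 (x - y);
rewrite ?(ger0_norm s) ?(ltr0_norm s); apply/andP; split; lra.
Qed.


Lemma derive1_meas (R : realType) (Lbar : R) (f : R -> R) :
  retention Lbar f -> measurable_fun `]0, Lbar[ (derive1 f).
Proof.
case=> f0 [frng [fc fd]].
have [L0|L0] := leP Lbar 0.
  by rewrite set_itv_ge ?bnd_simp -?leNgt //; exact: measurable_fun_set0.
pose c := fun y : R => Num.min (Num.max y 0) Lbar.
have mc : measurable_fun setT c.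
  apply: nondecreasing_measurable => // x y xy.
  rewrite /c le_min !ge_min lexx orbT andbT; apply/orP; left; rewrite le_max !ge_max xy lexx /= ?orbT.
  by case: (leP 0 y) => //= /ltW; rewrite andbT; exact: le_trans.
have mf : measurable_fun `[0, Lbar] f.
  exact: subspace_continuous_measurable_fun.
have cin : c @` setT `<=` `[0, Lbar].
  move=> _ [z _ <-]; rewrite /= in_itv /= /c le_min ge_min lexx orbT andbT.
  by rewrite le_max lexx orbT (ltW L0).
have mft : measurable_fun setT (f \o c) by exact: (measurable_comp (measurable_itv _) cin mf mc).
pose h := fun n x => (harmonic n)^-1 * ((f \o c) (harmonic n + x) - (f \o c) x).
have hm : forall m, measurable_fun `]0, Lbar[ (h m).
  move=> m; apply: measurable_funTS; apply: measurable_funM => //.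
  apply: measurable_funB => //.
  by apply: measurableT_comp => //; apply: measurable_funD.
have hc : forall x, x \in `]0, Lbar[ -> h ^~ x @ \oo --> derive1 f x.
move=> x /=; rewrite in_itv /= => /andP[x0 xL].
have dx : 0 < x < Lbar by rewrite x0 xL.
have D := derivable_seq (fd x dx).1.
apply: cvg_trans D; apply: near_eq_cvg.
have /cvgrPdist_lt/(_ (Lbar - x)) := @cvg_harmonic R.
rewrite subr_gt0 => /(_ xL); apply: filterS => n /=.
rewrite sub0r normrN ger0_norm ?harmonic_ge0 // => hn.
have cE y : 0 <= y <= Lbar -> c y = y.
  by case/andP=> y0 yL; rewrite /c (max_idPl y0) (min_idPl yL).
rewrite /h /= !cE //; first by rewrite (ltW x0) (ltW xL).
by rewrite addr_ge0 ?harmonic_ge0 ?(ltW x0) //= -lerBrDr ltW.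
exact: (measurable_fun_cvg hm hc).
Qed.

Lemma lip_cont (R : realType) (f : R -> R) K :
  (forall x y, `|f x - f y| <= K * `|x - y|) -> continuous f.
Proof.
move=> H x; apply/cvgrPdist_lt => e e0.
have K1 : 0 < `|K| + 1 by rewrite ltr_wpDl.
rewrite !near_simpl /=; apply/nbhs_ballP; exists (e / (`|K| + 1)).
  by rewrite /= divr_gt0.
move=> y /=; rewrite /ball /= => xy.
apply: (le_lt_trans (H x y)).
apply: (le_lt_trans (y := (`|K| + 1) * `|x - y|)).
  by rewrite ler_wpM2r // (le_trans (ler_norm K)) // lerDl.
by rewrite mulrC -ltr_pdivlMr.
Qed.

Lemma lip_within (R : realType) (f : R -> R) a b K : a <= b ->
  (forall x y, a <= x <= b -> a <= y <= b -> `|f x - f y| <= K * `|x - y|) ->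
  {within `[a, b], continuous f}.
Proof.
move=> ab H.
pose c := fun y : R => Num.min (Num.max y a) b.
have cin y : a <= c y <= b.
  by rewrite /c le_min ge_min lexx orbT andbT le_max lexx orbT ab.
have cE y : a <= y <= b -> c y = y.
  by case/andP=> y0 yL; rewrite /c (max_idPl y0) (min_idPl yL).
have Kp : 0 <= K \/ forall x y, a <= x <= b -> a <= y <= b -> f x = f y.
  have [alt|bla|aeb] := ltgtP a b; first last.
  - right => x y /andP[ax xb] /andP[ay yb].
    have -> : x = a by apply/le_anti; rewrite ax aeb xb.
    by have -> : y = a by apply/le_anti; rewrite ay aeb yb.
  - by move: ab; rewrite leNgt bla.
    left; have := H a b; rewrite !lexx ab => /(_ isT isT) h.
    have := le_trans (normr_ge0 _) h; rewrite pmulr_lge0 // normr_gt0 subr_eq0.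
    by rewrite lt_eqF.
apply: (@subspace_eq_continuous _ _ _ (f \o c)).
  by move=> y; rewrite inE /= in_itv /= => /cE ->.
apply: continuous_subspaceT.
case: Kp => [K0|fc].
  apply: (@lip_cont _ _ K) => x y /=.
  apply: (le_trans (H _ _ (cin x) (cin y))).
  by rewrite ler_wpM2l // (le_trans (min_lip _ _ _ _)) // max_lip.
apply: (@lip_cont _ _ 0) => x y /=.
by rewrite (fc _ _ (cin x) (cin y)) subrr normr0 mul0r.
Qed.

Lemma RintOO {R : realType} {Lbar : R} {h : R -> R} :
  measurable_fun `]0, Lbar[ h ->
  Rintegral lebesgue_measure `[0, Lbar] h = Rintegral lebesgue_measure `]0, Lbar[ h.
Proof.
move=> mh; rewrite /Rintegral integral_itv_bndoo //.
exact/measurable_EFinP.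
Qed.

Lemma intO (R : realType) (Lbar : R) (h : R -> R) :
  measurable_fun `]0, Lbar[ h -> (forall l, 0 < l < Lbar -> `|h l| <= 1) ->
  lebesgue_measure.-integrable `]0, Lbar[ (EFin \o h).
Proof.
move=> mh hb; apply: measurable_bounded_integrable => //.
  have := @lebesgue_measure_itv R `]0, Lbar[; rewrite /= => ->; case: ifPn => // _; rewrite -EFinB ltry //.
exists 1; split; first exact: num_real.
move=> M M1 z; rewrite /= in_itv /= => hz.
exact: le_trans (hb z hz) (ltW M1).
Qed.

Lemma bnd01 (R : realType) (a d : R) : 0 <= a <= 1 -> 0 <= d <= 1 ->
  `|(1 - a) - (1 - a) * d| <= 1.
Proof.
move=> /andP[? ?] /andP[? ?]; rewrite ler_norml; apply/andP; split; nra.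
Qed.

Lemma key (R : realType) (Lbar p0 : R) (G0 Gt D : R -> R) :
  measurable_fun `]0, Lbar[ G0 -> measurable_fun `]0, Lbar[ Gt ->
  measurable_fun `]0, Lbar[ D ->
  (forall l, 0 < l < Lbar -> [/\ 0 <= G0 l <= 1, 0 <= Gt l <= 1, 0 <= D l <= 1 & Gt l <= G0 l]) ->
  - Rintegral lebesgue_measure `[0, Lbar] (fun l => 1 - G0 l) <=
    - p0 - Rintegral lebesgue_measure `[0, Lbar] (fun l => (1 - G0 l) * D l) ->
  - Rintegral lebesgue_measure `[0, Lbar] (fun l => 1 - Gt l) <=
    - p0 - Rintegral lebesgue_measure `[0, Lbar] (fun l => (1 - Gt l) * D l).
Proof.
move=> m0 mt mD hb.
have mB (G : R -> R) : measurable_fun `]0, Lbar[ G -> measurable_fun `]0, Lbar[ (fun l => 1 - G l).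
  by move=> mG; apply: measurable_funB.
have mM (G : R -> R) : measurable_fun `]0, Lbar[ G -> measurable_fun `]0, Lbar[ (fun l => (1 - G l) * D l).
  by move=> mG; apply: measurable_funM => //; apply: mB.
rewrite (RintOO (mB _ m0)) (RintOO (mM _ m0)) (RintOO (mB _ mt)) (RintOO (mM _ mt)) => H.
have i1 (G : R -> R) : (forall l, 0 < l < Lbar -> 0 <= G l <= 1) -> measurable_fun `]0, Lbar[ G ->
   lebesgue_measure.-integrable `]0, Lbar[ (EFin \o (fun l => 1 - G l)).
  move=> hG mG; apply: intO; first exact: mB.
  move=> l /hG /andP[a b]; rewrite ger0_norm; first by rewrite lerBlDr lerDl.
  by rewrite subr_ge0.
have i2 (G : R -> R) : (forall l, 0 < l < Lbar -> 0 <= G l <= 1) -> measurable_fun `]0, Lbar[ G ->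
   lebesgue_measure.-integrable `]0, Lbar[ (EFin \o (fun l => (1 - G l) * D l)).
  move=> hG mG; apply: intO; first exact: mM.
  move=> l hl; have /andP[a b] := hG l hl; have [_ _ /andP[c d] _] := hb l hl.
  rewrite normrM !ger0_norm ?subr_ge0 //.
  by rewrite mulr_ile1 ?subr_ge0 // lerBlDr lerDl.
have h0 l : 0 < l < Lbar -> 0 <= G0 l <= 1 by move=> /hb [].
have ht l : 0 < l < Lbar -> 0 <= Gt l <= 1 by move=> /hb [].
suff : Rintegral lebesgue_measure `]0, Lbar[ (fun l => 1 - G0 l) -
   Rintegral lebesgue_measure `]0, Lbar[ (fun l => (1 - G0 l) * D l) <=
   Rintegral lebesgue_measure `]0, Lbar[ (fun l => 1 - Gt l) -
   Rintegral lebesgue_measure `]0, Lbar[ (fun l => (1 - Gt l) * D l) by lra.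
rewrite -!RintegralB //; try by [apply: i1|apply: i2].
apply: le_Rintegral => //.
- apply: intO; first by apply: measurable_funB; [apply: mB|apply: mM].
  by move=> l hl; have [h1 _ h3 _] := hb l hl; exact: bnd01.
- apply: intO; first by apply: measurable_funB; [apply: mB|apply: mM].
  by move=> l hl; have [_ h1 h3 _] := hb l hl; exact: bnd01.
move=> l; rewrite /= in_itv /= => hl; have [_ _ /andP[c d] e] := hb l hl.
rewrite -[X in X - _]mulr1 -mulrBr -[X in _ <= X - _]mulr1 -mulrBr.
by rewrite ler_wpM2r ?subr_ge0 // lerB.

Qed.

Lemma nincr (R : realType) (f : R -> R) a b K x : a < b ->
  (forall t, a < t < b -> derivable f t 1) ->
  (forall t, a < t < b -> derive1 f t <= 0) ->
  (forall x y, a <= x <= b -> a <= y <= b -> `|f x - f y| <= K * `|x - y|) ->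
  a <= x <= b -> f x <= f a.
Proof.
move=> ab hd hs hl hx.
have hd' : forall t, t \in `]a, b[ -> derivable f t 1.
  by move=> t; rewrite in_itv /=; exact: hd.
have hs' : forall t, t \in `]a, b[ -> derive1 f t <= 0.
  by move=> t; rewrite in_itv /=; exact: hs.
have := @ler0_derive1_le_cc R f a b hd' hs' (@lip_within R f a b K (ltW ab) hl).
move=> H; apply: H.
- by rewrite in_itv /=.
- by rewrite in_itv /= lexx (ltW ab).
- by case/andP: hx.
Qed.

Theorem proposition4
  (R : realType)
  (* probability space (S, Sigma, P) *)
  (d : measure_display) (S : measurableType d) (P : probability S R)
  (* type space Theta = [tlo, thi], type distribution mu with density q *)
  (tlo thi : R) (htlo : tlo < thi)
  (mu : probability R R) (q : R -> R)
  (hq_meas : measurable_fun setT q) (hq_ge0 : forall x, 0 <= q x)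
  (hmu : forall A : set R, measurable A ->
     mu A = (\int[lebesgue_measure]_(x in A `&` `[tlo, thi]) (q x)%:E)%E)
  (* losses L_theta with values in [0, Lbar] and continuous d.f. F_theta *)
  (Lbar : R) (L : R -> S -> R)
  (hL_meas : forall th, tlo <= th <= thi -> measurable_fun setT (L th))
  (hL_range : forall th s, tlo <= th <= thi -> 0 <= L th s <= Lbar)
  (hF_cont : forall th, tlo <= th <= thi -> continuous (distr_fn P (L th)))
  (* distortion functions *)
  (g : R -> R -> R) (gIn : R -> R)
  (hg : forall th, tlo <= th <= thi -> distortion (g th))
  (hgIn : distortion gIn)
  (* (A1) *)
  (hA1 : forall th t, tlo <= th <= thi -> 0 <= t <= 1 -> g th t <= gIn t)
  (* (A2) *)
  (hA2_diff : forall l th, tlo < th < thi ->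
     derivable (fun x => distr_fn P (L x) l) th 1)
  (hA2_lip : exists K : R, forall l th th',
     tlo <= th <= thi -> tlo <= th' <= thi ->
     `|distr_fn P (L th) l - distr_fn P (L th') l| <= K * `|th - th'|)
  (hA2_sign : forall l th, tlo < th < thi ->
     derive1 (fun x => distr_fn P (L x) l) th <= 0)
  (* (A3) *)
  (hA3_gdiff : exists delta : R, forall th t, tlo <= th <= thi -> 0 < t < 1 ->
     derivable (g th) t 1 /\ derive1 (g th) t <= delta)
  (hA3_thdiff : forall t th, 0 <= t <= 1 -> tlo < th < thi ->
     derivable (fun x => g x t) th 1)
  (hA3_lip : exists K : R, forall t th th', 0 <= t <= 1 ->
     tlo <= th <= thi -> tlo <= th' <= thi ->
     `|g th t - g th' t| <= K * `|th - th'|)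
  (hA3_sign : forall t th, 0 < t < 1 -> tlo < th < thi ->
     derive1 (fun x => g x t) th <= 0)
  (* the menu (Rm theta, pm theta) *)
  (Rm : R -> R -> R) (pm : R -> R)
  (hRm : forall th, tlo <= th <= thi -> retention Lbar (Rm th))
  (* standing integrability assumption, for this menu *)
  (hU_int : mu.-integrable `[tlo, thi]
     (fun th => (U_util Lbar (g th) (distr_fn P (L th)) (Rm th) (pm th))%:E))
  (hV_int : mu.-integrable `[tlo, thi]
     (fun th => (V_util Lbar gIn (distr_fn P (L th)) (Rm th) (pm th))%:E))
  (* hypotheses of the proposition *)
  (hIC : incentive_compatible Lbar tlo thi g (fun th => distr_fn P (L th)) Rm pm)
  (hP2 : P2 mu Lbar tlo thi gIn (fun th => distr_fn P (L th)) Rm pm) :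
  individually_rational mu Lbar tlo thi g gIn (fun th => distr_fn P (L th)) Rm pm
  <->
  U_noins Lbar (g tlo) (distr_fn P (L tlo)) <=
  U_util Lbar (g tlo) (distr_fn P (L tlo)) (Rm tlo) (pm tlo).

Proof.
set F := fun th => distr_fn P (L th).
have Ith : tlo <= tlo <= thi by rewrite lexx ltW.
split.
  by case=> h1 _; apply: h1.
move=> h0; split => //.
move=> th hth.
apply: (le_trans _ (hIC th tlo hth Ith)).
have mset th' l : tlo <= th' <= thi -> measurable [set s | L th' s <= l].
  move=> h'; have := hL_meas th' h' measurableT (`]-oo, l]%classic) (measurable_itv _).
  rewrite setTI; congr measurable; apply/seteqP; split => s /=; by rewrite in_itv.
have F01 th' l : tlo <= th' <= thi -> 0 <= F th' l <= 1.
  move=> h'; rewrite /F /distr_fn.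
  rewrite fine_ge0 ?measure_ge0 //=.
  exact: (@fine_le R _ 1%E (fin_num_measure P _ (mset th' l h')) isT (probability_le1 P (mset th' l h'))).
have Fmono th' : tlo <= th' <= thi -> {homo F th' : x y / x <= y}.
  move=> h' x y xy; rewrite /F /distr_fn fine_le ?(fin_num_measure P _ (mset _ _ h')) //.
  apply: le_measure; [by rewrite inE; exact: mset|by rewrite inE; exact: mset|].
  by move=> s /= hs; apply: le_trans hs xy.
have gmono th' s t : tlo <= th' <= thi -> 0 <= s -> s <= t -> t <= 1 -> g th' s <= g th' t.
  by move=> h'; have [_ [_ ]] := hg th' h'; apply.
have g01 th' t : tlo <= th' <= thi -> 0 <= t <= 1 -> 0 <= g th' t <= 1.
  move=> h' /andP[t0 t1]; have [g0 [g1 _]] := hg th' h'.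
  rewrite -{1}g0 -{1}g1; apply/andP; split; apply: gmono => //.
have Gmono th' : tlo <= th' <= thi -> {homo (fun l => g th' (F th' l)) : x y / x <= y}.
  move=> h' x y xy /=; have /andP[? ?] := F01 th' x h'; have /andP[? ?] := F01 th' y h'.
  by apply: gmono => //; apply: Fmono.
have Fth l : F th l <= F tlo l.
  have [K HK] := hA2_lip.
  apply: (@nincr R (fun x => F x l) tlo thi K th htlo).
  - by move=> t ht; apply: hA2_diff.
  - by move=> t ht; apply: hA2_sign.
  - by move=> x y hx hy; apply: HK.
  - exact: hth.
have gth t : 0 <= t <= 1 -> g th t <= g tlo t.
  move=> /andP[t0 t1].
  have [->|tn0] := eqVneq t 0.
    by have [-> _] := hg th hth; have [-> _] := hg tlo Ith.
  have [->|tn1] := eqVneq t 1.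
    by have [_ [-> _]] := hg th hth; have [_ [-> _]] := hg tlo Ith.
  have t01 : 0 < t < 1 by rewrite !lt_def tn0 t0 eq_sym tn1 t1.
  have [K HK] := hA3_lip.
  apply: (@nincr R (fun x => g x t) tlo thi K th htlo).
  - by move=> s hs; apply: hA3_thdiff => //; rewrite t0 t1.
  - by move=> s hs; apply: hA3_sign.
  - by move=> x y hx hy; apply: HK => //; rewrite t0 t1.
  - exact: hth.
have [_ [_ [_ hD]]] := hRm tlo Ith.
move: h0; rewrite /U_noins /U_util.
apply: key.
- by apply: nondecreasing_measurable => //; apply: Gmono.
- by apply: nondecreasing_measurable => //; apply: Gmono.
- exact: derive1_meas (hRm tlo Ith).
move=> l hl; split.
- exact: g01 (F01 _ _ Ith).
- exact: g01 (F01 _ _ hth).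
- by have [_ ->] := hD l hl.
- have /andP[a1 a2] := F01 th l hth; have /andP[b1 b2] := F01 tlo l Ith.
  apply: le_trans (gth _ _); last by rewrite b1 b2.
  exact: gmono.
Qed.
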